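(* Let $a(s)=s^n+a_1s^{n-1}+\cdots+a_n$ and $b(s)=s^n+b_1s^{n-1}+\cdots+b_n$ be real Hurwitz stable polynomials of degree $n$, and let $c(s)=s^{n-1}+x_1s^{n-2}+\cdots+x_{n-1}$ be a real polynomial such that $\mathrm{Re}\left[\frac{c(j\omega)}{a(j\omega)}\right]>0$ and $\mathrm{Re}\left[\frac{c(j\omega)}{b(j\omega)}\right]>0$ for all $\omega\in\mathbb{R}$. Let $h(s)$ be any monic real polynomial of degree $n$ and set $\tilde c(s):=c(s)+\delta h(s)$. Then there exists $\delta_0>0$ such that for every $\delta\in(0,\delta_0)$ both $\tilde c(s)/a(s)$ and $\tilde c(s)/b(s)$ are strictly positive real.
   Context: A real polynomial is Hurwitz stable if all its roots lie in the open left half-plane. A rational function $f(s)=p(s)/q(s)$ with $p,q$ real polynomials is strictly positive real if (i) $\deg p=\deg q$; (ii) $q$ is Hurwitz stable; (iii) $\mathrm{Re}[f(j\omega)]>0$ for all $\omega\in\mathbb{R}$. *)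

(* Defs.v *)
From HB Require Import structures.
From mathcomp Require Import all_boot all_order all_algebra.
From mathcomp Require Import reals.
From mathcomp.real_closed Require Import complex.
Set Implicit Arguments. Unset Strict Implicit. Unset Printing Implicit Defensive.
Import Order.TTheory GRing.Theory Num.Theory.
Local Open Scope ring_scope.

Definition polyC_of (R : rcfType) (p : {poly R}) : {poly R[i]} :=
  map_poly (real_complex R) p.

Definition eval_jw (R : rcfType) (p : {poly R}) (w : R) : R[i] :=
  (polyC_of p).[Complex 0 w].

Definition hurwitz (R : rcfType) (p : {poly R}) : Prop :=
  forall z : R[i], root (polyC_of p) z -> complex.Re z < 0.

Definition SPR (R : rcfType) (p q : {poly R}) : Prop :=
  [/\ (size p = size q)%N, hurwitz q &
      forall w : R, 0 < complex.Re (eval_jw p w / eval_jw q w)].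

(* Main.v *)
Require Import Defs.
From HB Require Import structures.
From mathcomp Require Import all_boot all_order all_algebra.
From mathcomp Require Import reals.
From mathcomp.real_closed Require Import complex.
From mathcomp Require Import ring lra.
From mathcomp Require Import classical_sets topology normedtype derive.
From mathcomp.real_closed Require Import polyrcf.
Import numFieldNormedType.Exports numFieldTopology.Exports.
Import Order.TTheory GRing.Theory Num.Theory.
Local Open Scope ring_scope.
Local Open Scope complex_scope.

Section Aux.
Set Implicit Arguments.
Variable R : rcfType.

Definition Jp (p : {poly R}) : {poly R[i]} := polyC_of p \Po ('i%C *: 'X).
Definition Kp (p : {poly R}) : {poly R[i]} := map_poly conjc (Jp p).
Definition PQ (p q : {poly R}) : {poly R} := map_poly (@complex.Re R) (Jp p * Kp q).

Lemma Re_add (x y : R[i]) : complex.Re (x + y) = complex.Re x + complex.Re y.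
Proof. by case: x => ? ?; case: y. Qed.

Lemma Re_mulr (x : R[i]) (r : R) : complex.Re (x * r%:C) = complex.Re x * r.
Proof. case: x => a b /=; ring. Qed.

Lemma horner_Re (F : {poly R[i]}) (w : R) :
  (map_poly (@complex.Re R) F).[w] = complex.Re F.[w%:C].
Proof.
have hs : (size (map_poly (@complex.Re R) F) <= size F)%N.
  by rewrite /map_poly size_poly.
rewrite (horner_coef_wide _ hs) [F.[_]]horner_coef.
rewrite (@big_morph _ _ (@complex.Re R) 0 +%R 0 +%R Re_add) //.
apply: eq_bigr => i _; rewrite coef_map_id0 //.
by rewrite -rmorphXn Re_mulr.
Qed.

Lemma jw_eq (w : R) : Complex 0 w = 'i%C * w%:C.
Proof. by apply/eqP; rewrite eq_complex /=; apply/andP; split; apply/eqP; ring. Qed.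

Lemma horner_Jp (p : {poly R}) (w : R) : (Jp p).[w%:C] = eval_jw p w.
Proof. rewrite /Jp horner_comp hornerZ hornerX. rewrite /eval_jw. by rewrite (jw_eq w). Qed.

Lemma horner_Kp (p : {poly R}) (w : R) : (Kp p).[w%:C] = conjc (eval_jw p w).
Proof. by rewrite /Kp -{1}(conjc_real w) horner_map horner_Jp. Qed.

Lemma horner_PQ (p q : {poly R}) (w : R) : (PQ p q).[w] = complex.Re (eval_jw p w * conjc (eval_jw q w)).
Proof. by rewrite /PQ horner_Re hornerM horner_Jp horner_Kp. Qed.

Lemma eval_jwN (p : {poly R}) (w : R) : eval_jw p (- w) = conjc (eval_jw p w).
Proof.
rewrite /eval_jw.
have -> : Complex 0 (- w) = conjc (Complex 0 w) by [].
rewrite -horner_map /polyC_of -map_poly_comp; congr (_.[_]).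
by apply: eq_map_poly => x /=; apply/eqP; rewrite eq_complex /= oppr0 !eqxx.
Qed.

Lemma Re_conj (x : R[i]) : complex.Re (conjc x) = complex.Re x.
Proof. by case: x. Qed.

Lemma horner_PQN (p q : {poly R}) (w : R) : (PQ p q).[- w] = (PQ p q).[w].
Proof. by rewrite !horner_PQ !eval_jwN -rmorphM Re_conj. Qed.

Lemma Re_div (x u : R[i]) : complex.Re (x / u) =
  complex.Re (x * conjc u) / (complex.Re u ^+ 2 + complex.Im u ^+ 2).
Proof.
case: x => x1 x2; case: u => u1 u2 /=.
ring.
Qed.

Lemma Re_div_pos (x u : R[i]) : u != 0 ->
  (0 < complex.Re (x / u)) = (0 < complex.Re (x * conjc u)).
Proof.
move=> hu; rewrite Re_div; apply: pmulr_lgt0; rewrite invr_gt0.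
move: hu; case: u => u1 u2 hu /=.
rewrite lt_neqAle addr_ge0 ?sqr_ge0 // andbT eq_sym paddr_eq0 ?sqr_ge0 //.
rewrite !sqrf_eq0; apply: contra hu => /andP[/eqP-> /eqP->] //.
Qed.

Lemma lead_polyC_of (p : {poly R}) : lead_coef (polyC_of p) = (lead_coef p)%:C.
Proof. by rewrite /polyC_of lead_coef_map. Qed.

Lemma size_polyC_of (p : {poly R}) : size (polyC_of p) = size p.
Proof. by rewrite /polyC_of size_map_poly. Qed.

Lemma size_iX : size ('i%C *: ('X : {poly R[i]})) = 2%N.
Proof.
rewrite size_scale ?size_polyX //.
by rewrite eq_complex /= negb_and oner_eq0 orbT.
Qed.

Lemma lead_Jp (p : {poly R}) :
  lead_coef (Jp p) = (lead_coef p)%:C * 'i%C ^+ (size p).-1.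
Proof.
rewrite /Jp lead_coef_comp ?size_iX // lead_polyC_of size_polyC_of.
by rewrite lead_coefZ lead_coefX mulr1.
Qed.

Lemma lead_Kp (p : {poly R}) :
  lead_coef (Kp p) = conjc ((lead_coef p)%:C * 'i%C ^+ (size p).-1).
Proof. by rewrite /Kp lead_coef_map lead_Jp. Qed.

Lemma i_conj_i : 'i%C * conjc 'i%C = 1 :> R[i].
Proof. by apply/eqP; rewrite eq_complex /=; apply/andP; split; apply/eqP; ring. Qed.

Lemma lead_PQ (p q : {poly R}) : p \is monic -> q \is monic -> size p = size q ->
  lead_coef (PQ p q) = 1.
Proof.
move=> /monicP mp /monicP mq spq.
have hl : lead_coef (Jp p * Kp q) = 1.
  rewrite lead_coefM lead_Jp lead_Kp mp mq spq rmorphM rmorphXn.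
  rewrite !rmorph1 !mul1r -exprMn (_ : 'i%C * _ = 1) ?expr1n //; exact: i_conj_i.
rewrite /PQ (lead_coef_map_id0 (f := @complex.Re R)) // hl //.
exact: oner_neq0.
Qed.

Lemma eval_jw_lin (c h : {poly R}) (d w : R) :
  eval_jw (c + d *: h) w = eval_jw c w + d%:C * eval_jw h w.
Proof. rewrite /eval_jw /polyC_of -mul_polyC rmorphD rmorphM /= map_polyC hornerD hornerM hornerC.
by []. Qed.

Lemma Re_lin (x y z : R[i]) (d : R) :
  complex.Re ((x + d%:C * y) * z) = complex.Re (x * z) + d * complex.Re (y * z).
Proof. case: x => ? ?; case: y => ? ?; case: z => ? ? /=; ring. Qed.

End Aux.

Lemma negnorm_le (T : realDomainType) (x : T) : - `|x| <= x.
Proof. have := ler_norm (- x); rewrite normrN lerNl. done. Qed.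

Section Main.
Variable R : realType.

Lemma key (n : nat) (a c h : {poly R}) :
  a \is monic -> size a = n.+1 -> h \is monic -> size h = n.+1 ->
  (forall w : R, 0 < complex.Re (eval_jw c w / eval_jw a w)) ->
  exists d0 : R, 0 < d0 /\ forall d : R, 0 < d -> d < d0 ->
    forall w : R, 0 < complex.Re (eval_jw (c + d *: h) w / eval_jw a w).
Proof.
move=> ma sa mh sh hca.
have anz : forall w, eval_jw a w != 0.
  move=> w; apply/eqP => e; have := hca w; rewrite e invr0 mulr0 /= ltxx //.
have Ppos : forall w, 0 < (PQ c a).[w].
  by move=> w; rewrite horner_PQ -Re_div_pos.
have lQ : lead_coef (PQ h a) = 1 by apply: lead_PQ => //; rewrite sa sh.
have lQp : 0 < lead_coef (PQ h a) by rewrite lQ ltr01.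
have [W0 hW0] := poly_pinfty_gt_lc lQp.
rewrite lQ in hW0.
pose W : R := `|W0|.
have W0le : W0 <= W by rewrite /W ler_norm.
have Wge0 : 0 <= W by rewrite /W normr_ge0.
pose fP : R -> R := fun x => (PQ c a).[x].
pose fQ : R -> R := fun x => (PQ h a).[x].
have cP0 : continuous fP by exact: continuous_horner.
have cQ0 : continuous fQ by exact: continuous_horner.
have cP : {within `[0, W], continuous fP}%classic by apply: continuous_subspaceT.
have cQ : {within `[0, W], continuous fQ}%classic by apply: continuous_subspaceT.
have [w0 _ hmin] := EVT_min Wge0 cP.
have [w1 _ hmin'] := EVT_min Wge0 cQ.
set m := (PQ c a).[w0]; set q0 := (PQ h a).[w1].
have mpos : 0 < m by apply: Ppos.
exists (m / (`|q0| + 1)); split.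
  by rewrite divr_gt0 // ltr_wpDl ?normr_ge0 ?ltr01.
move=> d d0 dlt w.
rewrite Re_div_pos // eval_jw_lin Re_lin -!horner_PQ.
wlog wge : w / 0 <= w.
  move=> H; case: (leP 0 w) => [/H //|wlt].
  rewrite -(horner_PQN c a) -(horner_PQN h a); apply: H.
  by rewrite oppr_ge0 ltW.
have hP := Ppos w.
case: (leP W w) => hw.
  have hQ : 1 <= (PQ h a).[w] by apply: hW0; apply: le_trans hw.
  have : 0 < d * (PQ h a).[w] by apply: mulr_gt0 => //; apply: lt_le_trans hQ.
  lra.
have win : w \in `[0, W] by rewrite in_itv /= wge ltW.
have h1 := hmin w win; have h2 := hmin' w win.
have h3 : d * q0 <= d * (PQ h a).[w] by rewrite ler_wpM2l // ltW.
have h4 : d * (- `|q0|) <= d * q0.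
  apply: ler_wpM2l; first exact: ltW.
  exact: negnorm_le.
have h5 : d * (`|q0| + 1) < m.
  by rewrite -ltr_pdivlMr // ltr_wpDl ?normr_ge0 ?ltr01.
rewrite mulrN in h4; rewrite mulrDr mulr1 in h5.
rewrite /fP /fQ -/m -/q0 in h1 h2.
lra.
Qed.
End Main.

Local Open Scope ring_scope.

Theorem lemma4 (R : realType) (n : nat) (a b c h : {poly R}) :
  (0 < n)%N ->
  a \is monic -> size a = n.+1 -> hurwitz a ->
  b \is monic -> size b = n.+1 -> hurwitz b ->
  c \is monic -> size c = n ->
  (forall w : R, 0 < complex.Re (eval_jw c w / eval_jw a w)) ->
  (forall w : R, 0 < complex.Re (eval_jw c w / eval_jw b w)) ->
  h \is monic -> size h = n.+1 ->
  exists delta0 : R, 0 < delta0 /\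
    forall delta : R, 0 < delta -> delta < delta0 ->
      SPR (c + delta *: h) a /\ SPR (c + delta *: h) b.
Proof.
move=> n0 ma sa ha mb sb hb mc sc hca hcb mh sh.
have [d1 [d1p H1]] := @key R n a c h ma sa mh sh hca.
have [d2 [d2p H2]] := @key R n b c h mb sb mh sh hcb.
exists (Num.min d1 d2); split; first by rewrite lt_min d1p d2p.
move=> d dp; rewrite lt_min => /andP[dl1 dl2].
have hs : size (c + d *: h) = n.+1.
  rewrite addrC size_polyDl size_scale ?gt_eqF //.
  by rewrite sc sh.
split; split => //; [by rewrite hs sa | exact: H1 | by rewrite hs sb | exact: H2].
Qed.
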